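(* Let $M, K, P, N$ be positive integers with $M < K \le P$ and such that $P$ divides $N$. Let $\mathbf{a}_1^T, \ldots, \mathbf{a}_M^T \in \mathbb{R}^{1\times N}$ be arbitrary row vectors. Then there exists a matrix $\mathbf{F} \in \mathbb{R}^{P \times N}$ such that: (i) for every set $\chi \subseteq \{1,\ldots,P\}$ with $|\chi| = K$, each of $\mathbf{a}_1^T, \ldots, \mathbf{a}_M^T$ is a linear combination of the rows of $\mathbf{F}$ indexed by $\chi$; and (ii) every row of $\mathbf{F}$ has sparsity at most $s = \frac{N}{P}(P-K+M)$.
   Context: The sparsity of a vector $\mathbf{u} \in \mathbb{R}^N$ is its number of nonzero entries, $\|\mathbf{u}\|_0 = \#\{j : u_j \neq 0\}$. *)

(* Defs.v *)
From mathcomp Require Import all_boot all_order all_algebra.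
Set Implicit Arguments. Unset Strict Implicit. Unset Printing Implicit Defensive.
Import Order.TTheory GRing.Theory Num.Theory.
Local Open Scope ring_scope.

Definition sparsity (R : ringType) (N : nat) (u : 'rV[R]_N) : nat :=
  #|[set j : 'I_N | u 0 j != 0]|.

Definition in_row_span (R : ringType) (P N : nat) (F : 'M[R]_(P, N))
  (chi : {set 'I_P}) (v : 'rV[R]_N) : Prop :=
  exists c : 'I_P -> R, v = \sum_(i in chi) c i *: row i F.

(* Main.v *)
Require Import Defs.
From mathcomp Require Import all_boot all_order all_algebra.
From mathcomp Require Import zify.
Import Order.TTheory GRing.Theory Num.Theory.
Local Open Scope ring_scope.
Lemma size_prod_le (R : nzRingType) (I : finType) (Pr : pred I) (F : I -> {poly R}) :
  (forall i, Pr i -> (size (F i) <= 2)%N) ->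
  (size (\prod_(i | Pr i) F i)%R <= (\sum_(i | Pr i) 1)%N.+1)%N.
Proof.
move=> hF.
apply: (big_rec2 (fun (p : {poly R}) (n : nat) => size p <= n.+1)%N).
  by rewrite size_poly1.
move=> i p n Pi hp /=; apply: leq_trans (size_polyMleq _ _) _.
have := hF i Pi; move: hp; lia.
Qed.

Lemma card_lt (n c : nat) : (c <= n)%N -> #|[set j : 'I_n | (j < c)%N]| = c.
Proof.
move=> hc.
have -> : [set j : 'I_n | (j < c)%N] = [set widen_ord hc j | j in 'I_c].
  apply/setP => j; rewrite inE; apply/idP/imsetP.
    by move=> hj; exists (Ordinal hj) => //; apply: val_inj.
  by case=> k _ ->; rewrite /= ltn_ord.
by rewrite card_imset ?card_ord //; by move=> x y /(congr1 val) /= /val_inj.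
Qed.
Section Interp.
Variables (R : fieldType) (P : nat) (x : 'I_P -> R).
Hypothesis xinj : injective x.

Definition Lp (S : {set 'I_P}) (i : 'I_P) : {poly R} :=
  \prod_(j | (j \in S) && (j != i)) (('X - (x j)%:P) * ((x i - x j)^-1)%:P).

Lemma Lp_sample (S : {set 'I_P}) i k : k \in S -> (Lp S i).[x k] = (i == k)%:R.
Proof.
move=> kS; rewrite /Lp horner_prod.
have [<-|nik] := eqVneq i k.
  apply: big1 => j /andP [_ nji].
  rewrite hornerM hornerXsubC hornerC mulfV // subr_eq0.
  by apply/eqP => /xinj /eqP; rewrite eq_sym (negPf nji).
rewrite (bigD1 k) /=; last by rewrite kS eq_sym nik.
by rewrite hornerM hornerXsubC hornerC subrr !mul0r.
Qed.

Lemma size_Lp (S : {set 'I_P}) i : i \in S -> (size (Lp S i) <= #|S|)%N.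
Proof.
move=> iS; apply: leq_trans; first apply: size_prod_le.
  move=> j _; apply: leq_trans (size_polyMleq _ _) _.
  rewrite size_XsubC; have := size_polyC_leq1 ((x i - x j)^-1).
  by case: (size _) => [|[|]].
rewrite (cardsD1 i S) iS add1n ltnS -sum1_card.
by apply: eq_leq; apply: eq_bigl => j; rewrite !inE andbC.
Qed.

Lemma interp (S : {set 'I_P}) (q : {poly R}) t : (size q <= #|S|)%N ->
  q.[t] = \sum_(i in S) (Lp S i).[t] * q.[x i].
Proof.
move=> sq.
set r := q - \sum_(i in S) q.[x i] *: Lp S i.
have r0 : r = 0.
  apply: (@roots_geq_poly_eq0 _ r [seq x k | k <- enum S]).
  - apply/allP => y /mapP [k]; rewrite mem_enum => kS ->.
    rewrite /root /r hornerD hornerN horner_sum.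
    rewrite (bigD1 k) //= big1 ?addr0.
      by rewrite hornerZ Lp_sample // eqxx mulr1 subrr.
    by move=> i /andP [_ nik]; rewrite hornerZ Lp_sample // (negPf nik) mulr0.
  - by rewrite map_inj_uniq ?enum_uniq.
  - rewrite size_map -cardE; apply/leq_sizeP => j hj.
    rewrite /r coefB coef_sum (leq_sizeP _ _ sq) // big1 ?subr0 // => i iS.
    by rewrite coefZ (leq_sizeP _ _ (@size_Lp S i iS)) // mulr0.
move/eqP: r0; rewrite /r subr_eq0 => /eqP qE.
rewrite {1}qE horner_sum; apply: eq_bigr => i _.
by rewrite hornerZ mulrC.
Qed.
End Interp.
Theorem theorem1 (R : realFieldType) (M K P N : nat)
  (hM : (0 < M)%N) (hK : (0 < K)%N) (hP : (0 < P)%N) (hN : (0 < N)%N)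
  (hMK : (M < K)%N) (hKP : (K <= P)%N) (hPN : (P %| N)%N)
  (a : 'I_M -> 'rV[R]_N) :
  exists F : 'M[R]_(P, N),
    (forall chi : {set 'I_P}, #|chi| = K ->
       forall m : 'I_M, in_row_span F chi (a m)) /\
    (forall i : 'I_P, (sparsity (row i F) <= (N %/ P) * (P - K + M))%N).
Proof.
have [p Pp] : exists p, P = p.+2 by exists P.-2; lia.
subst P.
set L := (N %/ p.+2)%N.
have NL : N = (L * p.+2)%N by rewrite divnK.
set c := (K - M)%N.
pose x (i : 'I_p.+2) : R := (i : nat)%:R.
pose z (m : 'I_M) : R := (p.+2 + m)%N%:R.
have xinj : injective x.
  by move=> i j /eqP; rewrite /x eqr_nat => /eqP; apply: val_inj.
have xz i m : x i != z m.
  rewrite /x /z eqr_nat; have := ltn_ord i; lia.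
have zinj : injective z.
  move=> m1 m2 /eqP; rewrite /z eqr_nat => /eqP h; apply: val_inj => /=; lia.
pose T (b : 'I_p.+2) := [set i : 'I_p.+2 | (val (i - b)%R < c)%N].
have cardT b : #|T b| = c.
  have -> : T b = (fun i => i - b) @^-1: [set j : 'I_p.+2 | (val j < c)%N].
    by apply/setP => i; rewrite !inE.
  by rewrite card_preimset ?card_lt //; [lia | apply: (can_inj (addrNK b))].
have countB i : #|[set b | i \in T b]| = c.
  have -> : [set b | i \in T b] = (fun b => i - b) @^-1: [set j : 'I_p.+2 | (val j < c)%N].
    by apply/setP => b; rewrite !inE.
  rewrite card_preimset ?card_lt //; first lia.
  by move=> b1 b2 /addrI /oppr_inj.
pose Q (b : 'I_p.+2) (m' : 'I_M) : {poly R} :=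
  \prod_(j in T b) ('X - (x j)%:P) * \prod_(m'' | m'' != m') ('X - (z m'')%:P).
pose pb b m' := (Q b m').[z m']^-1 *: Q b m'.
have size_pb b m' : (size (pb b m') <= K)%N.
  apply: leq_trans (size_scale_leq _ _) _.
  apply: leq_trans (size_polyMleq _ _) _.
  have h1 : (size (\prod_(j in T b) ('X - (x j)%:P))%R <= c.+1)%N.
    apply: leq_trans; first apply: size_prod_le.
      by move=> j _; rewrite size_XsubC.
    by rewrite sum1_card cardT.
  have h2 : (size (\prod_(m'' | m'' != m') ('X - (z m'')%:P))%R <= M)%N.
    apply: leq_trans; first apply: size_prod_le.
      by move=> j _; rewrite size_XsubC.
    rewrite sum1dep_card.
    have -> : [set y | y != m'] = [set~ m'] by apply/setP => y; rewrite !inE.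
    rewrite cardsC1 card_ord; lia.
  apply: (@leq_trans (c.+1 + M).-1); first by rewrite -!subn1 leq_sub2r // leq_add.
  rewrite /c; lia.
have pb0 b m' i : i \in T b -> (pb b m').[x i] = 0.
  move=> iT; rewrite hornerZ; set u := _^-1.
  rewrite hornerM horner_prod (bigD1 i) //=.
  by rewrite hornerXsubC subrr !mul0r mulr0.
have pbz b m' m : (pb b m').[z m] = (m == m')%:R.
  have [->|nmm] := eqVneq m m'.
    rewrite hornerZ mulVf //.
    rewrite hornerM horner_prod [X in _ * X]horner_prod mulf_neq0 //.
      apply/prodf_neq0 => j _; rewrite hornerXsubC subr_eq0 eq_sym; exact: xz.
    apply/prodf_neq0 => j njm; rewrite hornerXsubC subr_eq0.
    by apply/eqP => /zinj /eqP; rewrite eq_sym (negPf njm).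
  rewrite hornerZ; set u := _^-1.
  rewrite hornerM [X in _ * (_ * X)]horner_prod (bigD1 m) //=.
  by rewrite hornerXsubC subrr !mul0r !mulr0.
pose blk (n : 'I_N) : 'I_p.+2 := inord (n %% p.+2).
pose F := \matrix_(i, n) \sum_(m' < M) (pb (blk n) m').[x i] * a m' 0 n.
exists F; split.
  move=> chi hchi m.
  exists (fun i => (@Lp _ _ x chi i).[z m]).
  apply/rowP => n; rewrite summxE.
  transitivity (\sum_(m' < M) (pb (blk n) m').[z m] * a m' 0 n).
    rewrite (bigD1 m) //= pbz eqxx mul1r big1 ?addr0 // => m' nm.
    by rewrite pbz eq_sym (negPf nm) mul0r.
  transitivity (\sum_(m' < M) \sum_(i in chi) (@Lp _ _ x chi i).[z m] * ((pb (blk n) m').[x i] * a m' 0 n)).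
    apply: eq_bigr => m' _.
    rewrite (@interp _ _ x xinj chi _ (z m)) ?hchi ?size_pb // mulr_suml.
    by apply: eq_bigr => i _; rewrite mulrA.
  rewrite exchange_big; apply: eq_bigr => i _.
  by rewrite !mxE mulr_sumr.
move=> i.
rewrite /sparsity.
set B := [set b | i \notin T b].
have sub : [set j : 'I_N | row i F 0 j != 0] \subset [set n : 'I_N | blk n \in B].
  apply/subsetP => n; rewrite !inE; apply: contraNN => iT.
  rewrite !mxE big1 // => m' _; by rewrite pb0 ?mul0r // inE.
apply: leq_trans (subset_leq_card sub) _.
have qlt (n : 'I_N) : (n %/ p.+2 < L)%N.
  by rewrite ltn_divLR // -NL ltn_ord.
pose f (n : 'I_N) : 'I_p.+2 * 'I_L := (blk n, Ordinal (qlt n)).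
have finj : injective f.
  move=> n1 n2 [] /(congr1 val) /=; rewrite !inordK ?ltn_pmod // => hr hq.
  by apply: val_inj; rewrite /= (divn_eq n1 p.+2) (divn_eq n2 p.+2) hr hq.
rewrite -(card_imset _ finj).
have sub2 : f @: [set n : 'I_N | blk n \in B] \subset setX B [set: 'I_L].
  apply/subsetP => y /imsetP [n]; rewrite inE => hn ->; by rewrite in_setX in_setT andbT.
apply: leq_trans (subset_leq_card sub2) _.
rewrite cardsX cardsT card_ord.
have -> : #|B| = (p.+2 - c)%N.
  have := cardsC [set b | i \in T b]; rewrite countB card_ord.
  have -> : ~: [set b | i \in T b] = B by apply/setP => b; rewrite !inE.
  lia.
rewrite mulnC leq_mul2l; apply/orP; right; lia.
Qed.
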